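(* Let $K\subset\{(x,y)\in\mathbb{R}^2:0<x\le y\}$ be compact, $E=\{\xi\in\mathbb{R}^{2\times2}:(\lambda_1(\xi),\lambda_2(\xi))\in K\}$, and let $\xi\in\operatorname{int}E^{rc}$. Then there exists an in-approximation $(U_n)_{n\ge1}$ of $E$ such that $\xi\in U_1$.
   Context: $\lambda_1(\xi)\le\lambda_2(\xi)$ are the singular values of $\xi\in\mathbb{R}^{2\times2}$ (eigenvalues of $\sqrt{\xi\xi^t}$). For compact $C$, $C^{rc}=\{\xi: f(\xi)\le0$ for every rank one convex $f:\mathbb{R}^{2\times2}\to\mathbb{R}$ with $f|_C\le0\}$; for open $U$, $U^{rc}=\bigcup_{C\subset U\text{ compact}}C^{rc}$. A function is rank one convex if it is convex along every segment $[\xi,\eta]$ with $\operatorname{rank}(\xi-\eta)=1$. A sequence of open sets $U_i$ is an in-approximation of a compact set $E$ if $U_i\subseteq U_{i+1}^{rc}$ for all $i$ and $\sup_{\eta\in U_i}\operatorname{dist}(\eta,E)\to0$ as $i\to\infty$. *)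

(* Defs.v *)
From Stdlib Require Import Reals.
Open Scope R_scope.

Record M2 := mkM2 { a11 : R; a12 : R; a21 : R; a22 : R }.

Definition madd (x y : M2) : M2 :=
  mkM2 (a11 x + a11 y) (a12 x + a12 y) (a21 x + a21 y) (a22 x + a22 y).
Definition mscale (t : R) (x : M2) : M2 :=
  mkM2 (t * a11 x) (t * a12 x) (t * a21 x) (t * a22 x).
Definition msub (x y : M2) : M2 := madd x (mscale (-1) y).
Definition mzero : M2 := mkM2 0 0 0 0.

Definition mdet (x : M2) : R := a11 x * a22 x - a12 x * a21 x.
Definition mnorm2 (x : M2) : R :=
  a11 x ^ 2 + a12 x ^ 2 + a21 x ^ 2 + a22 x ^ 2.
Definition mdist (x y : M2) : R := sqrt (mnorm2 (msub x y)).

(* Singular values: l1 <= l2 are the eigenvalues of sqrt(x x^t), i.e.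
   nonnegative numbers whose squares are the eigenvalues (with multiplicity)
   of the symmetric 2x2 matrix x x^t, i.e. l1^2 + l2^2 = tr(x x^t) = |x|^2
   and l1^2 l2^2 = det(x x^t) = (det x)^2. *)
Definition singvals (x : M2) (l1 l2 : R) : Prop :=
  0 <= l1 /\ l1 <= l2 /\
  l1 ^ 2 + l2 ^ 2 = mnorm2 x /\ l1 * l2 = Rabs (mdet x).

Definition mopen (U : M2 -> Prop) : Prop :=
  forall x, U x -> exists e, 0 < e /\ forall y, mdist x y < e -> U y.
Definition mclosed (C : M2 -> Prop) : Prop :=
  mopen (fun x => ~ C x).
Definition mbounded (C : M2 -> Prop) : Prop :=
  exists M, forall x, C x -> mnorm2 x <= M.
(* compact = closed and bounded (Heine-Borel in R^4) *)
Definition mcompact (C : M2 -> Prop) : Prop := mclosed C /\ mbounded C.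
Definition minterior (S : M2 -> Prop) (x : M2) : Prop :=
  exists e, 0 < e /\ forall y, mdist x y < e -> S y.

Definition dist2 (p q : R * R) : R :=
  sqrt ((fst p - fst q) ^ 2 + (snd p - snd q) ^ 2).
Definition open2 (U : R * R -> Prop) : Prop :=
  forall p, U p -> exists e, 0 < e /\ forall q, dist2 p q < e -> U q.
Definition compact2 (K : R * R -> Prop) : Prop :=
  open2 (fun p => ~ K p) /\
  exists M, forall p, K p -> fst p ^ 2 + snd p ^ 2 <= M.

Definition rank_one (x : M2) : Prop := x <> mzero /\ mdet x = 0.

Definition rank_one_convex (f : M2 -> R) : Prop :=
  forall x y, rank_one (msub x y) ->
  forall t, 0 <= t <= 1 ->
    f (madd (mscale t x) (mscale (1 - t) y)) <= t * f x + (1 - t) * f y.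

Definition rc_hull_compact (C : M2 -> Prop) (x : M2) : Prop :=
  forall f, rank_one_convex f -> (forall c, C c -> f c <= 0) -> f x <= 0.

Definition rc_hull_open (U : M2 -> Prop) (x : M2) : Prop :=
  exists C, mcompact C /\ (forall c, C c -> U c) /\ rc_hull_compact C x.

Definition in_approximation (U : nat -> M2 -> Prop) (E : M2 -> Prop) : Prop :=
  (forall i, mopen (U i)) /\
  (forall i x, U i x -> rc_hull_open (U (S i)) x) /\
  (forall eps, 0 < eps -> exists N, forall i, (N <= i)%nat ->
     forall eta, U i eta -> exists e, E e /\ mdist eta e < eps).

(* Main.v *)
Require Import Defs.
From Stdlib Require Import Reals Lra Psatz Lia.
Open Scope R_scope.

Lemma sqrt_le_of (X Y : R) : 0 <= Y -> X <= Y ^ 2 -> sqrt X <= Y.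
Proof. intros HY H. rewrite <- (sqrt_pow2 Y HY). apply sqrt_le_1_alt; exact H. Qed.

Lemma le_sqrt_of (X Y : R) : Y ^ 2 <= X -> Y <= sqrt X.
Proof. intros H. destruct (Rle_dec 0 Y) as [HY|HY].
  - rewrite <- (sqrt_pow2 Y HY). apply sqrt_le_1_alt; exact H.
  - assert (0 <= X) by nra. pose proof (sqrt_positivity X H0). lra. Qed.

Lemma tri4 (p1 p2 p3 p4 q1 q2 q3 q4 : R) :
  sqrt ((p1+q1)^2 + (p2+q2)^2 + (p3+q3)^2 + (p4+q4)^2) <=
  sqrt (p1^2+p2^2+p3^2+p4^2) + sqrt (q1^2+q2^2+q3^2+q4^2).
Proof.
  set (P := p1^2+p2^2+p3^2+p4^2). set (Q := q1^2+q2^2+q3^2+q4^2).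
  assert (HP : 0 <= P) by (unfold P; nra). assert (HQ : 0 <= Q) by (unfold Q; nra).
  assert (sP := sqrt_positivity P HP). assert (sQ := sqrt_positivity Q HQ).
  apply sqrt_le_of; [lra|].
  assert (CS : p1*q1+p2*q2+p3*q3+p4*q4 <= sqrt P * sqrt Q).
  { rewrite <- sqrt_mult by assumption. apply le_sqrt_of.
    assert (E : P*Q - (p1*q1+p2*q2+p3*q3+p4*q4)^2 =
      (p1*q2-p2*q1)^2+(p1*q3-p3*q1)^2+(p1*q4-p4*q1)^2+(p2*q3-p3*q2)^2
      +(p2*q4-p4*q2)^2+(p3*q4-p4*q3)^2) by (unfold P, Q; ring).
    assert (0 <= (p1*q2-p2*q1)^2+(p1*q3-p3*q1)^2+(p1*q4-p4*q1)^2+(p2*q3-p3*q2)^2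
      +(p2*q4-p4*q2)^2+(p3*q4-p4*q3)^2) by (repeat apply Rplus_le_le_0_compat; apply pow2_ge_0).
    lra. }
  assert (E2 : (sqrt P + sqrt Q)^2 = P + Q + 2 * (sqrt P * sqrt Q)).
  { replace ((sqrt P + sqrt Q)^2) with (sqrt P ^2 + sqrt Q ^2 + 2 * (sqrt P * sqrt Q)) by ring.
    rewrite !pow2_sqrt by assumption. ring. }
  rewrite E2.
  assert (E3 : (p1+q1)^2 + (p2+q2)^2 + (p3+q3)^2 + (p4+q4)^2 = P + Q + 2*(p1*q1+p2*q2+p3*q3+p4*q4)) by (unfold P, Q; ring).
  rewrite E3. lra.
Qed.

Lemma tri2 (a b c d : R) :
  sqrt ((a+c)^2 + (b+d)^2) <= sqrt (a^2+b^2) + sqrt (c^2+d^2).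
Proof.
  pose proof (tri4 a b 0 0 c d 0 0) as H.
  replace ((a+c)^2 + (b+d)^2) with ((a+c)^2 + (b+d)^2 + (0+0)^2 + (0+0)^2) by ring.
  replace (a^2+b^2) with (a^2+b^2+0^2+0^2) by ring.
  replace (c^2+d^2) with (c^2+d^2+0^2+0^2) by ring. exact H.
Qed.

Lemma rev2 (a b c d : R) :
  Rabs (sqrt (a^2+b^2) - sqrt (c^2+d^2)) <= sqrt ((a-c)^2 + (b-d)^2).
Proof.
  pose proof (tri2 (a-c) (b-d) c d) as H1.
  pose proof (tri2 (c-a) (d-b) a b) as H2.
  replace (a-c+c) with a in H1 by ring. replace (b-d+d) with b in H1 by ring.
  replace (c-a+a) with c in H2 by ring. replace (d-b+b) with d in H2 by ring.
  replace ((c-a)^2+(d-b)^2) with ((a-c)^2+(b-d)^2) in H2 by ring.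
  apply Rabs_le; lra.
Qed.

Lemma mdist_tri x y z : mdist x z <= mdist x y + mdist y z.
Proof.
  unfold mdist, mnorm2, msub, madd, mscale; simpl.
  pose proof (tri4 (a11 x + -1*a11 y) (a12 x + -1*a12 y) (a21 x + -1*a21 y) (a22 x + -1*a22 y)
                   (a11 y + -1*a11 z) (a12 y + -1*a12 z) (a21 y + -1*a21 z) (a22 y + -1*a22 z)) as H.
  replace (a11 x + -1 * a11 y + (a11 y + -1 * a11 z)) with (a11 x + -1 * a11 z) in H by ring.
  replace (a12 x + -1 * a12 y + (a12 y + -1 * a12 z)) with (a12 x + -1 * a12 z) in H by ring.
  replace (a21 x + -1 * a21 y + (a21 y + -1 * a21 z)) with (a21 x + -1 * a21 z) in H by ring.
  replace (a22 x + -1 * a22 y + (a22 y + -1 * a22 z)) with (a22 x + -1 * a22 z) in H by ring.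
  exact H.
Qed.

Lemma mdist_sym x y : mdist x y = mdist y x.
Proof. unfold mdist, mnorm2, msub, madd, mscale; simpl. f_equal. ring. Qed.

Lemma mdist_refl x : mdist x x = 0.
Proof. unfold mdist, mnorm2, msub, madd, mscale; simpl.
  replace (_ + _) with 0 by ring. apply sqrt_0. Qed.

Lemma mdist_nonneg x y : 0 <= mdist x y.
Proof. apply sqrt_positivity. unfold mnorm2.
  repeat apply Rplus_le_le_0_compat; apply pow2_ge_0. Qed.

Lemma mnorm2_nonneg x : 0 <= mnorm2 x.
Proof. unfold mnorm2. repeat apply Rplus_le_le_0_compat; apply pow2_ge_0. Qed.

Lemma mdist_scale s x y : mdist (mscale s x) (mscale s y) = Rabs s * mdist x y.
Proof.
  unfold mdist. replace (mnorm2 (msub (mscale s x) (mscale s y))) with (s^2 * mnorm2 (msub x y)).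
  - rewrite sqrt_mult_alt by apply pow2_ge_0. f_equal. rewrite <- sqrt_Rsqr_abs. unfold Rsqr. f_equal. ring.
  - unfold mnorm2, msub, madd, mscale; simpl. ring.
Qed.

Lemma mdist_scale2 s t x : mdist (mscale s x) (mscale t x) = Rabs (s - t) * sqrt (mnorm2 x).
Proof.
  unfold mdist. replace (mnorm2 (msub (mscale s x) (mscale t x))) with ((s-t)^2 * mnorm2 x).
  - rewrite sqrt_mult_alt by apply pow2_ge_0. f_equal. rewrite <- sqrt_Rsqr_abs. unfold Rsqr. f_equal. ring.
  - unfold mnorm2, msub, madd, mscale; simpl. ring.
Qed.


Definition cfa x := (a11 x + a22 x)/2.
Definition cfb x := (a21 x - a12 x)/2.
Definition acc x := (a11 x - a22 x)/2.
Definition acd x := (a12 x + a21 x)/2.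
Definition rho x := sqrt (cfa x ^2 + cfb x ^2).
Definition om x := sqrt (acc x ^2 + acd x ^2).

Lemma sos2 a b : 0 <= a^2 + b^2.
Proof. apply Rplus_le_le_0_compat; apply pow2_ge_0. Qed.

Lemma rho_nonneg x : 0 <= rho x. Proof. apply sqrt_positivity, sos2. Qed.
Lemma om_nonneg x : 0 <= om x. Proof. apply sqrt_positivity, sos2. Qed.
Lemma rho_sq x : rho x ^ 2 = cfa x ^2 + cfb x ^2. Proof. apply pow2_sqrt, sos2. Qed.
Lemma om_sq x : om x ^ 2 = acc x ^2 + acd x ^2. Proof. apply pow2_sqrt, sos2. Qed.

Lemma mnorm2_co x : mnorm2 x = 2*(rho x^2 + om x^2).
Proof. rewrite rho_sq, om_sq. unfold mnorm2, cfa, cfb, acc, acd. field. Qed.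
Lemma mdet_co x : mdet x = rho x^2 - om x^2.
Proof. rewrite rho_sq, om_sq. unfold mdet, cfa, cfb, acc, acd. field. Qed.

Lemma sq_inj a b : 0 <= a -> 0 <= b -> a^2 = b^2 -> a = b.
Proof. intros. nra. Qed.

Lemma SV x l1 l2 : singvals x l1 l2 <-> (l1 = Rabs (rho x - om x) /\ l2 = rho x + om x).
Proof.
  pose proof (rho_nonneg x). pose proof (om_nonneg x).
  unfold singvals. rewrite mnorm2_co, mdet_co. split.
  - intros [H1 [H2 [H3 H4]]].
    destruct (Rle_dec (om x) (rho x)).
    + rewrite Rabs_right in H4 by nra. rewrite Rabs_right by lra.
      assert (A : l1 + l2 = 2 * rho x) by (apply sq_inj; nra).
      assert (B : l2 - l1 = 2 * om x) by (apply sq_inj; nra).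
      lra.
    + rewrite Rabs_left1 in H4 by nra. rewrite Rabs_left1 by lra.
      assert (A : l1 + l2 = 2 * om x) by (apply sq_inj; nra).
      assert (B : l2 - l1 = 2 * rho x) by (apply sq_inj; nra).
      lra.
  - intros [-> ->]. destruct (Rle_dec (om x) (rho x)).
    + assert (0 <= rho x ^2 - om x^2) by nra.
      rewrite (Rabs_right (rho x - om x)) by lra. rewrite (Rabs_right (rho x ^2 - om x^2)) by lra.
      repeat split; try lra; ring.
    + assert (rho x ^2 - om x^2 <= 0) by nra.
      rewrite (Rabs_left1 (rho x - om x)) by lra. rewrite (Rabs_left1 (rho x ^2 - om x^2)) by lra.
      repeat split; try lra; ring.
Qed.

Lemma sum_le_sqrt r1 r2 : 0 <= r1 -> 0 <= r2 -> r1 + r2 <= sqrt (2 * (r1^2 + r2^2)).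
Proof. intros. apply le_sqrt_of. pose proof (pow2_ge_0 (r1 - r2)). nra. Qed.

Lemma lip x y : Rabs (rho x - rho y) + Rabs (om x - om y) <= mdist x y.
Proof.
  pose proof (rev2 (cfa x) (cfb x) (cfa y) (cfb y)) as H1.
  pose proof (rev2 (acc x) (acd x) (acc y) (acd y)) as H2.
  fold (rho x) (rho y) in H1. fold (om x) (om y) in H2.
  set (r1 := sqrt ((cfa x - cfa y)^2 + (cfb x - cfb y)^2)) in *.
  set (r2 := sqrt ((acc x - acc y)^2 + (acd x - acd y)^2)) in *.
  assert (0 <= r1) by apply sqrt_positivity, sos2.
  assert (0 <= r2) by apply sqrt_positivity, sos2.
  assert (r1 + r2 <= mdist x y).
  { eapply Rle_trans. apply sum_le_sqrt; assumption.
    unfold mdist. right. f_equal. unfold r1, r2. rewrite !pow2_sqrt by apply sos2.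
    unfold mnorm2, msub, madd, mscale, cfa, cfb, acc, acd; simpl. field. }
  lra.
Qed.

Lemma rho_scale t x : 0 <= t -> rho (mscale t x) = t * rho x.
Proof. intros. unfold rho. replace (cfa (mscale t x) ^ 2 + cfb (mscale t x) ^ 2)
  with (t^2 * (cfa x ^2 + cfb x ^2)).
  rewrite sqrt_mult_alt by apply pow2_ge_0. rewrite sqrt_pow2 by lra. reflexivity.
  unfold cfa, cfb, mscale; simpl. field. Qed.
Lemma om_scale t x : 0 <= t -> om (mscale t x) = t * om x.
Proof. intros. unfold om. replace (acc (mscale t x) ^ 2 + acd (mscale t x) ^ 2)
  with (t^2 * (acc x ^2 + acd x ^2)).
  rewrite sqrt_mult_alt by apply pow2_ge_0. rewrite sqrt_pow2 by lra. reflexivity.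
  unfold acc, acd, mscale; simpl. field. Qed.

Definition Pt (u1 u2 v1 v2 p q : R) : M2 :=
  mkM2 ((p+q)/2*u1 + (p-q)/2*v1) ((p-q)/2*v2 - (p+q)/2*u2)
       ((p+q)/2*u2 + (p-q)/2*v2) ((p+q)/2*u1 - (p-q)/2*v1).

Lemma Pt_det u1 u2 v1 v2 (hu : u1^2 + u2^2 = 1) (hv : v1^2 + v2^2 = 1) p q : mdet (Pt u1 u2 v1 v2 p q) = p * q.
Proof.
  unfold mdet, Pt; simpl.
  transitivity (((p+q)/2)^2*(u1^2+u2^2) - ((p-q)/2)^2*(v1^2+v2^2)); [ring|].
  rewrite hu, hv. field. Qed.
Lemma Pt_norm u1 u2 v1 v2 (hu : u1^2 + u2^2 = 1) (hv : v1^2 + v2^2 = 1) p q : mnorm2 (Pt u1 u2 v1 v2 p q) = p^2 + q^2.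
Proof.
  unfold mnorm2, Pt; simpl.
  transitivity (2*(((p+q)/2)^2*(u1^2+u2^2) + ((p-q)/2)^2*(v1^2+v2^2))); [ring|].
  rewrite hu, hv. field. Qed.

Lemma Pt_sub u1 u2 v1 v2 p q p' q' :
  msub (Pt u1 u2 v1 v2 p q) (Pt u1 u2 v1 v2 p' q') = Pt u1 u2 v1 v2 (p-p') (q-q').
Proof. unfold msub, madd, mscale, Pt; simpl. f_equal; field. Qed.
Lemma Pt_comb u1 u2 v1 v2 s p q p' q' :
  madd (mscale s (Pt u1 u2 v1 v2 p q)) (mscale (1-s) (Pt u1 u2 v1 v2 p' q'))
  = Pt u1 u2 v1 v2 (s*p + (1-s)*p') (s*q+(1-s)*q').
Proof. unfold msub, madd, mscale, Pt; simpl. f_equal; field. Qed.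
Lemma Pt_scale u1 u2 v1 v2 t p q :
  mscale t (Pt u1 u2 v1 v2 p q) = Pt u1 u2 v1 v2 (t*p) (t*q).
Proof. unfold mscale, Pt; simpl. f_equal; field. Qed.

Lemma unit_of a b : exists u1 u2, u1^2 + u2^2 = 1 /\
   sqrt (a^2+b^2) * u1 = a /\ sqrt (a^2+b^2) * u2 = b.
Proof.
  destruct (Req_dec (sqrt (a^2+b^2)) 0) as [H|H].
  - exists 1, 0. pose proof H as H'. apply sqrt_eq_0 in H; [|apply sos2].
    assert (a = 0) by nra. assert (b = 0) by nra. rewrite H'. repeat split; lra.
  - exists (a / sqrt (a^2+b^2)), (b / sqrt (a^2+b^2)).
    split; [|split; field; exact H].
    transitivity ((a^2+b^2) / (sqrt (a^2+b^2))^2); [field; exact H|].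
    rewrite pow2_sqrt by apply sos2. field.
    intro H0. apply H. rewrite H0. apply sqrt_0.
Qed.

Lemma decomp x : exists u1 u2 v1 v2, u1^2+u2^2 = 1 /\ v1^2+v2^2 = 1 /\
  x = Pt u1 u2 v1 v2 (rho x + om x) (rho x - om x).
Proof.
  destruct (unit_of (cfa x) (cfb x)) as [u1 [u2 [hu [e1 e2]]]].
  destruct (unit_of (acc x) (acd x)) as [v1 [v2 [hv [e3 e4]]]].
  exists u1, u2, v1, v2. split; [exact hu|]. split; [exact hv|].
  fold (rho x) in e1, e2. fold (om x) in e3, e4.
  destruct x as [x11 x12 x21 x22]. unfold Pt.
  unfold cfa, cfb, acc, acd in *; simpl in *.
  replace ((rho {| a11 := x11; a12 := x12; a21 := x21; a22 := x22 |} +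
    om {| a11 := x11; a12 := x12; a21 := x21; a22 := x22 |} +
    (rho {| a11 := x11; a12 := x12; a21 := x21; a22 := x22 |} -
     om {| a11 := x11; a12 := x12; a21 := x21; a22 := x22 |})) / 2)
   with (rho {| a11 := x11; a12 := x12; a21 := x21; a22 := x22 |}) by field.
  replace ((rho {| a11 := x11; a12 := x12; a21 := x21; a22 := x22 |} +
    om {| a11 := x11; a12 := x12; a21 := x21; a22 := x22 |} -
    (rho {| a11 := x11; a12 := x12; a21 := x21; a22 := x22 |} -
     om {| a11 := x11; a12 := x12; a21 := x21; a22 := x22 |})) / 2)
   with (om {| a11 := x11; a12 := x12; a21 := x21; a22 := x22 |}) by field.
  f_equal; lra.
Qed.


Lemma hull_self (C : M2 -> Prop) c : C c -> rc_hull_compact C c.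
Proof. intros Hc f _ Hf. apply Hf, Hc. Qed.

Lemma hull_step (C : M2 -> Prop) y z s : rc_hull_compact C y -> rc_hull_compact C z ->
  rank_one (msub y z) -> 0 <= s <= 1 ->
  rc_hull_compact C (madd (mscale s y) (mscale (1-s) z)).
Proof.
  intros Hy Hz Hr Hs f Hf HC.
  pose proof (Hf y z Hr s Hs). pose proof (Hy f Hf HC). pose proof (Hz f Hf HC).
  nra.
Qed.

Lemma Pt_rank1 u1 u2 v1 v2 dp dq : u1^2+u2^2 = 1 -> v1^2+v2^2 = 1 ->
  dp * dq = 0 -> (dp <> 0 \/ dq <> 0) -> rank_one (Pt u1 u2 v1 v2 dp dq).
Proof.
  intros hu hv H0 H1. split.
  - intro E. assert (N : mnorm2 (Pt u1 u2 v1 v2 dp dq) = 0) by (rewrite E; unfold mnorm2, mzero; simpl; ring).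
    rewrite Pt_norm in N by assumption. destruct H1; nra.
  - rewrite Pt_det by assumption. exact H0.
Qed.

Lemma lam (C : M2 -> Prop) u1 u2 v1 v2 p q P Q : u1^2+u2^2 = 1 -> v1^2+v2^2 = 1 ->
  Rabs p < P -> Rabs q < Q ->
  (forall s s', (s = 1 \/ s = -1) -> (s' = 1 \/ s' = -1) -> C (Pt u1 u2 v1 v2 (s*P) (s'*Q))) ->
  rc_hull_compact C (Pt u1 u2 v1 v2 p q).
Proof.
  intros hu hv Hp Hq HC.
  assert (P0 : 0 < P) by (pose proof (Rabs_pos p); lra).
  assert (Q0 : 0 < Q) by (pose proof (Rabs_pos q); lra).
  apply Rabs_def2 in Hp. apply Rabs_def2 in Hq.
  assert (Hs : forall s, (s = 1 \/ s = -1) -> rc_hull_compact C (Pt u1 u2 v1 v2 (s*P) q)).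
  { intros s Hs.
    replace (Pt u1 u2 v1 v2 (s*P) q) with
      (madd (mscale ((Q+q)/(2*Q)) (Pt u1 u2 v1 v2 (s*P) (1*Q)))
            (mscale (1-(Q+q)/(2*Q)) (Pt u1 u2 v1 v2 (s*P) (-1*Q)))).
    2: { rewrite Pt_comb. f_equal; field; lra. }
    apply hull_step.
    - apply hull_self, HC; auto.
    - apply hull_self, HC; auto.
    - rewrite Pt_sub. apply Pt_rank1; auto. ring. right. lra.
    - split. apply Rmult_le_pos. lra. left; apply Rinv_0_lt_compat; lra.
      apply (Rmult_le_reg_r (2*Q)). lra. field_simplify; lra. }
  replace (Pt u1 u2 v1 v2 p q) with
      (madd (mscale ((P+p)/(2*P)) (Pt u1 u2 v1 v2 (1*P) q))
            (mscale (1-(P+p)/(2*P)) (Pt u1 u2 v1 v2 (-1*P) q))).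
  2: { rewrite Pt_comb. f_equal; field; lra. }
  apply hull_step.
  - apply Hs; auto.
  - apply Hs; auto.
  - rewrite Pt_sub. apply Pt_rank1; auto. ring. left. lra.
  - split. apply Rmult_le_pos. lra. left; apply Rinv_0_lt_compat; lra.
    apply (Rmult_le_reg_r (2*P)). lra. field_simplify; lra.
Qed.

Lemma hull_scale (C : M2 -> Prop) t x : 0 < t -> rc_hull_compact C x ->
  rc_hull_compact (fun y => exists c, C c /\ y = mscale t c) (mscale t x).
Proof.
  intros Ht Hx f Hf HC.
  apply (Hx (fun y => f (mscale t y))).
  - intros y z Hr s Hs.
    replace (mscale t (madd (mscale s y) (mscale (1 - s) z))) with
      (madd (mscale s (mscale t y)) (mscale (1-s) (mscale t z)))
      by (unfold madd, mscale; simpl; f_equal; ring).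
    apply Hf; auto.
    destruct Hr as [Hr1 Hr2]. split.
    + intro E. apply Hr1. unfold msub, madd, mscale, mzero in *. simpl in *.
      injection E; intros e4 e3 e2 e1.
      f_equal; apply (Rmult_eq_reg_l t); try lra.
    + unfold mdet, msub, madd, mscale in *; simpl in *.
      transitivity (t^2 * ((a11 y + -1 * a11 z) * (a22 y + -1 * a22 z) -
       (a12 y + -1 * a12 z) * (a21 y + -1 * a21 z))); [ring|]. rewrite Hr2. ring.
  - intros c Hc. apply HC. exists c; auto.
Qed.


Definition Ef (K : R*R -> Prop) c := exists l1 l2, singvals c l1 l2 /\ K (l1,l2).
Definition T (K : R*R -> Prop) t y := exists c, Ef K c /\ y = mscale t c.

Lemma T_iff K t y : 0 < t -> (T K t y <-> K (Rabs (rho y - om y) / t, (rho y + om y) / t)).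
Proof.
  intros Ht. split.
  - intros [c [[l1 [l2 [Hs HK]]] ->]]. apply SV in Hs. destruct Hs as [-> ->].
    rewrite rho_scale, om_scale by lra.
    replace (t * rho c - t * om c) with (t * (rho c - om c)) by ring.
    rewrite Rabs_mult, (Rabs_right t) by lra.
    replace (t * Rabs (rho c - om c) / t) with (Rabs (rho c - om c)) by (field; lra).
    replace ((t * rho c + t * om c) / t) with (rho c + om c) by (field; lra). exact HK.
  - intros HK. exists (mscale (/t) y). split.
    + exists (Rabs (rho (mscale (/ t) y) - om (mscale (/ t) y))), (rho (mscale (/ t) y) + om (mscale (/ t) y)).
      split. apply SV; auto.
      assert (0 <= /t) by (left; apply Rinv_0_lt_compat; lra).
      rewrite rho_scale, om_scale by auto.
      replace (/ t * rho y - / t * om y) with (/t * (rho y - om y)) by ring.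
      rewrite Rabs_mult, (Rabs_right (/t)) by lra.
      replace (/ t * Rabs (rho y - om y)) with (Rabs (rho y - om y) / t) by (field; lra).
      replace (/ t * rho y + / t * om y) with ((rho y + om y) / t) by (field; lra). exact HK.
    + destruct y; unfold mscale; simpl. f_equal; field; lra.
Qed.

Lemma sqrt_sum_le a b : sqrt (a^2 + b^2) <= Rabs a + Rabs b.
Proof.
  apply sqrt_le_of. pose proof (Rabs_pos a); pose proof (Rabs_pos b); lra.
  rewrite <- (pow2_abs a), <- (pow2_abs b).
  pose proof (Rabs_pos a); pose proof (Rabs_pos b). nra.
Qed.

Lemma T_compact K t M : compact2 K -> (forall p, K p -> fst p ^ 2 + snd p ^ 2 <= M) ->
  0 < t <= 1 -> mcompact (T K t).
Proof.
  intros [HO _] HM Ht. split.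
  - intros y Hy. rewrite T_iff in Hy by lra.
    destruct (HO _ Hy) as [e [He Hb]].
    exists (t*e/2). split. nra.
    intros y' Hd Hy'. rewrite T_iff in Hy' by lra. revert Hy'. apply Hb.
    pose proof (lip y y') as L. unfold dist2; simpl.
    eapply Rle_lt_trans. apply sqrt_sum_le.
    pose proof (Rabs_triang_inv (rho y - om y) (rho y' - om y')).
    pose proof (Rabs_triang_inv (rho y' - om y') (rho y - om y)).
    assert (A1 : Rabs (Rabs (rho y - om y) - Rabs (rho y' - om y')) <=
          Rabs (rho y - rho y') + Rabs (om y - om y')).
    { apply Rabs_le. split.
      - eapply Rle_trans with (- Rabs ((rho y' - om y') - (rho y - om y))); [|lra].
        apply Ropp_le_contravar. replace (rho y' - om y' - (rho y - om y)) with
          (-(rho y - rho y') + (om y - om y')) by ring.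
        eapply Rle_trans. apply Rabs_triang. rewrite Rabs_Ropp. lra.
      - eapply Rle_trans. apply Rabs_triang_inv.
        replace (rho y - om y - (rho y' - om y')) with ((rho y - rho y') + - (om y - om y')) by ring.
        eapply Rle_trans. apply Rabs_triang. rewrite Rabs_Ropp. lra. }
    assert (A2 : Rabs (rho y + om y - (rho y' + om y')) <=
          Rabs (rho y - rho y') + Rabs (om y - om y')).
    { replace (rho y + om y - (rho y' + om y')) with ((rho y - rho y') + (om y - om y')) by ring.
      apply Rabs_triang. }
    replace (Rabs (rho y - om y) / t - Rabs (rho y' - om y') / t) with
      ((Rabs (rho y - om y) - Rabs (rho y' - om y')) * /t) by (field; lra).
    replace ((rho y + om y) / t - (rho y' + om y') / t) with
      ((rho y + om y - (rho y' + om y')) * /t) by (field; lra).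
    rewrite !Rabs_mult, (Rabs_right (/t)) by (left; apply Rinv_0_lt_compat; lra).
    assert (mdist y y' * / t < e/2).
    { apply (Rmult_lt_reg_r t). lra. field_simplify; lra. }
    assert (0 < /t) by (apply Rinv_0_lt_compat; lra).
    assert (B1 : Rabs (Rabs (rho y - om y) - Rabs (rho y' - om y')) * / t <= mdist y y' * / t)
      by (apply Rmult_le_compat_r; lra).
    assert (B2 : Rabs (rho y + om y - (rho y' + om y')) * / t <= mdist y y' * / t)
      by (apply Rmult_le_compat_r; lra).
    lra.
  - exists M. intros y [c [[l1 [l2 [Hs HK]]] ->]].
    pose proof (HM _ HK) as H1; simpl in H1.
    destruct Hs as [_ [_ [Hn _]]].
    replace (mnorm2 (mscale t c)) with (t^2 * mnorm2 c) by (unfold mnorm2, mscale; simpl; ring).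
    pose proof (mnorm2_nonneg c). assert (t^2 <= 1) by nra.
    assert (t^2 * mnorm2 c <= 1 * mnorm2 c) by (apply Rmult_le_compat_r; lra). lra.
Qed.


Definition V (K : R*R -> Prop) (n : nat) (x : M2) : Prop :=
  exists c l1 l2 t, singvals c l1 l2 /\ K (l1,l2) /\ 1 - /(INR n + 2) < t < 1 /\
    mdist x (mscale t c) < (1-t)*l1.

Lemma inv_bound n : 0 < /(INR n + 2) <= /2.
Proof. pose proof (pos_INR n). split. apply Rinv_0_lt_compat; lra.
  apply Rinv_le_contravar; lra. Qed.

Lemma V_open K n : mopen (V K n).
Proof.
  intros x [c [l1 [l2 [t [Hs [HK [Ht Hd]]]]]]].
  exists ((1-t)*l1 - mdist x (mscale t c)). split. lra.
  intros y Hy. exists c, l1, l2, t. split; [exact Hs|]. split; [exact HK|]. split; [exact Ht|].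
  pose proof (mdist_tri y x (mscale t c)). rewrite (mdist_sym y x) in H. lra.
Qed.

Lemma T_sub_V K n t y : (forall p, K p -> 0 < fst p /\ fst p <= snd p) ->
  1 - /(INR n + 2) < t < 1 -> T K t y -> V K n y.
Proof.
  intros Hpos Ht [c [[l1 [l2 [Hs HK]]] ->]].
  exists c, l1, l2, t. split; [exact Hs|]. split; [exact HK|]. split; [exact Ht|].
  rewrite mdist_refl. destruct (Hpos _ HK) as [H1 _]. simpl in H1. nra.
Qed.

Lemma V_step K M n x : compact2 K -> (forall p, K p -> fst p ^ 2 + snd p ^ 2 <= M) ->
  (forall p, K p -> 0 < fst p /\ fst p <= snd p) ->
  V K n x -> rc_hull_open (V K (S n)) x.
Proof.
  intros HKc HM Hpos [c [l1 [l2 [t [Hs [HK [Ht Hd]]]]]]].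
  destruct (Hpos _ HK) as [Hl1 Hl12]; simpl in Hl1, Hl12.
  pose proof (inv_bound n) as Ib.
  apply SV in Hs. destruct Hs as [El1 El2].
  pose proof (lip x (mscale t c)) as L.
  rewrite rho_scale, om_scale in L by lra.
  set (dr := rho x - t * rho c) in *. set (dw := om x - t * om c) in *.
  assert (S2 : rho x + om x < l2).
  { pose proof (Rle_abs dr). pose proof (Rle_abs dw). unfold dr, dw in *. nra. }
  assert (S1 : Rabs (rho x - om x) < l1).
  { replace (rho x - om x) with (t * (rho c - om c) + (dr - dw)) by (unfold dr, dw; ring).
    eapply Rle_lt_trans. apply Rabs_triang. rewrite Rabs_mult, (Rabs_right t) by lra.
    rewrite <- El1. assert (Rabs (dr - dw) <= Rabs dr + Rabs dw).
    { unfold Rminus. eapply Rle_trans. apply Rabs_triang. rewrite Rabs_Ropp. lra. }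
    nra. }
  pose proof (rho_nonneg x). pose proof (om_nonneg x).
  set (a' := 1 - /(INR (S n) + 2)).
  pose proof (inv_bound (S n)) as Ib'.
  set (m := Rmax a' (Rmax ((rho x + om x)/l2) (Rabs (rho x - om x)/l1))).
  assert (Hm : m < 1).
  { unfold m. apply Rmax_lub_lt. unfold a'; lra. apply Rmax_lub_lt.
    apply (Rmult_lt_reg_r l2). lra. field_simplify; lra.
    apply (Rmult_lt_reg_r l1). lra. field_simplify; lra. }
  set (t' := (m+1)/2).
  assert (Ha : a' <= m) by apply Rmax_l.
  assert (Hm2 : (rho x + om x)/l2 <= m) by (eapply Rle_trans; [apply Rmax_l|apply Rmax_r]).
  assert (Hm1 : Rabs (rho x - om x)/l1 <= m) by (eapply Rle_trans; [apply Rmax_r|apply Rmax_r]).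
  assert (Ht' : 0 < t' <= 1) by (unfold t', a' in *; lra).
  exists (T K t'). split; [|split].
  - eapply T_compact; eauto.
  - intros y Hy. apply (T_sub_V K (S n) t'); auto. unfold t'; fold a'; lra.
  - destruct (decomp x) as [u1 [u2 [v1 [v2 [hu [hv Ex]]]]]].
    rewrite Ex. apply lam with (P := t' * l2) (Q := t' * l1); auto.
    + rewrite Rabs_right by lra.
      assert ((rho x + om x) <= m * l2) .
      { replace (rho x + om x) with ((rho x + om x)/l2 * l2) by (field; lra).
        apply Rmult_le_compat_r; lra. }
      assert (0 < (1-m)*l2) by (apply Rmult_lt_0_compat; lra).
      unfold t'; lra.
    + assert (Rabs (rho x - om x) <= m * l1).
      { replace (Rabs (rho x - om x)) with (Rabs (rho x - om x)/l1 * l1) by (field; lra).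
        apply Rmult_le_compat_r; lra. }
      assert (0 < (1-m)*l1) by (apply Rmult_lt_0_compat; lra).
      unfold t'; lra.
    + intros s s' Es Es'.
      exists (Pt u1 u2 v1 v2 (s*l2) (s'*l1)). split.
      * exists l1, l2. split; auto.
        assert (s^2 = 1) by (destruct Es; subst; ring).
        assert (s'^2 = 1) by (destruct Es'; subst; ring).
        repeat split; try lra.
        -- rewrite Pt_norm by auto. replace ((s*l2)^2 + (s'*l1)^2) with (s^2*l2^2 + s'^2*l1^2) by ring.
           rewrite H1, H2. ring.
        -- rewrite Pt_det by auto. replace (s * l2 * (s' * l1)) with ((s*s') * (l1*l2)) by ring.
           rewrite Rabs_mult. rewrite (Rabs_right (l1*l2)) by nra.
           replace (Rabs (s*s')) with 1. ring.
           rewrite Rabs_mult.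
           assert (Rabs s = 1) by (destruct Es; subst; unfold Rabs; destruct Rcase_abs; lra).
           assert (Rabs s' = 1) by (destruct Es'; subst; unfold Rabs; destruct Rcase_abs; lra).
           rewrite H3, H4. ring.
      * rewrite Pt_scale. f_equal; ring.
Qed.


Lemma V_close K M n x : (forall p, K p -> fst p ^ 2 + snd p ^ 2 <= M) ->
  V K n x -> exists e, Ef K e /\ mdist x e < 2 * sqrt (Rabs M) / (INR n + 2).
Proof.
  intros HM [c [l1 [l2 [t [Hs [HK [Ht Hd]]]]]]].
  exists c. split. exists l1, l2; auto.
  pose proof (inv_bound n).
  pose proof (HM _ HK) as H1; simpl in H1.
  destruct Hs as [Hl1 [Hl12 [Hn _]]].
  assert (B : sqrt (mnorm2 c) <= sqrt (Rabs M)).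
  { apply sqrt_le_1_alt. pose proof (Rle_abs M). lra. }
  assert (Bl : l1 <= sqrt (mnorm2 c)) by (apply le_sqrt_of; nra).
  pose proof (mdist_tri x (mscale t c) c) as T1.
  assert (E1 : mdist (mscale t c) c = (1-t) * sqrt (mnorm2 c)).
  { assert (E0 : mscale 1 c = c) by (destruct c; unfold mscale; simpl; f_equal; ring).
    rewrite <- E0 at 2. rewrite mdist_scale2. f_equal. rewrite Rabs_left1 by lra. ring. }
  rewrite E1 in T1.
  assert (mdist x c < (1-t) * (2 * sqrt (Rabs M))).
  { assert ((1-t)*l1 <= (1-t) * sqrt (Rabs M)) by (apply Rmult_le_compat_l; lra).
    assert ((1-t)*sqrt (mnorm2 c) <= (1-t) * sqrt (Rabs M)) by (apply Rmult_le_compat_l; lra).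
    lra. }
  assert (0 <= sqrt (Rabs M)) by apply sqrt_positivity, Rabs_pos.
  assert ((1-t) * (2 * sqrt (Rabs M)) <= / (INR n + 2) * (2 * sqrt (Rabs M)))
    by (apply Rmult_le_compat_r; lra).
  unfold Rdiv. lra.
Qed.

Theorem theorem4p8 (K : R * R -> Prop) (xi : M2) :
  compact2 K ->
  (forall p, K p -> 0 < fst p /\ fst p <= snd p) ->
  minterior (rc_hull_compact
               (fun z => exists l1 l2, singvals z l1 l2 /\ K (l1, l2))) xi ->
  exists U : nat -> M2 -> Prop,
    in_approximation U (fun z => exists l1 l2, singvals z l1 l2 /\ K (l1, l2)) /\
    U O xi.
Proof.
  intros HKc Hpos [e0 [He0 H0]].
  pose proof HKc as [_ [M HM]].
  set (N0 := sqrt (mnorm2 xi)).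
  assert (HN0 : 0 <= N0) by apply sqrt_positivity, mnorm2_nonneg.
  set (h := Rmin (1/4) (e0 / (4 * (N0 + 1)))).
  assert (Hh1 : h <= 1/4) by apply Rmin_l.
  assert (Hh2 : h <= e0 / (4 * (N0 + 1))) by apply Rmin_r.
  assert (Hh0 : 0 < h).
  { apply Rmin_glb_lt. lra. apply Rdiv_lt_0_compat; lra. }
  set (t0 := 1 - h).
  exists (fun i => match i with O => (fun y => mdist xi y < e0/4) | S n => V K n end).
  split; [split; [|split]|].
  - intros [|n].
    + intros y Hy. exists (e0/4 - mdist xi y). split. lra.
      intros z Hz. pose proof (mdist_tri xi y z). lra.
    + apply V_open.
  - intros [|n] x Hx.
    + exists (T K t0). split; [|split].
      * eapply T_compact; eauto. unfold t0; lra.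
      * intros y Hy. apply (T_sub_V K 0 t0); auto. simpl. unfold t0; lra.
      * assert (E : x = mscale t0 (mscale (/t0) x)).
        { destruct x; unfold mscale; simpl. f_equal; field; unfold t0; lra. }
        rewrite E. apply hull_scale. unfold t0; lra.
        apply H0.
        pose proof (mdist_tri xi (mscale (/t0) xi) (mscale (/t0) x)) as T1.
        rewrite mdist_scale in T1.
        assert (E0 : mscale 1 xi = xi) by (destruct xi; unfold mscale; simpl; f_equal; ring).
        assert (E1 : mdist xi (mscale (/t0) xi) = Rabs (1 - /t0) * N0).
        { rewrite <- E0 at 1. rewrite mdist_scale2. reflexivity. }
        rewrite E1 in T1.
        assert (Hi : / t0 = 1 + h / t0) by (unfold t0; field; lra).
        assert (Hht : h / t0 <= 4/3 * h).
        { unfold t0. apply (Rmult_le_reg_r (1-h)). lra. field_simplify; nra. }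
        rewrite Hi in T1. rewrite (Rabs_left1 (1 - (1 + h/t0))) in T1.
        2:{ assert (0 <= h/t0) by (unfold Rdiv; apply Rmult_le_pos; [lra|left; apply Rinv_0_lt_compat; unfold t0; lra]). lra. }
        rewrite Rabs_right in T1.
        2:{ assert (0 <= h/t0) by (unfold Rdiv; apply Rmult_le_pos; [lra|left; apply Rinv_0_lt_compat; unfold t0; lra]). lra. }
        assert (A1 : (h/t0) * N0 <= e0/3).
        { apply Rle_trans with (4/3 * (e0 / (4*(N0+1))) * N0).
          apply Rmult_le_compat_r; lra.
          apply (Rmult_le_reg_r (N0+1)). lra. field_simplify; nra. }
        assert (A2 : (1 + h/t0) * mdist xi x <= 4/3 * (e0/4)).
        { pose proof (mdist_nonneg xi x). apply Rle_trans with (4/3 * mdist xi x).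
          apply Rmult_le_compat_r; lra. lra. }
        rewrite Hi. lra.
    + eapply V_step; eauto.
  - intros eps Heps.
    destruct (INR_archimed eps (2 * sqrt (Rabs M)) Heps) as [N HN].
    exists (S N). intros [|n] Hn eta Heta. lia.
    destruct (V_close K M n eta HM Heta) as [e [He Hd]].
    exists e. split. exact He.
    apply Rlt_le_trans with (1 := Hd).
    assert (HNn : (N <= n)%nat) by lia.
    apply le_INR in HNn. pose proof (pos_INR N).
    apply (Rmult_le_reg_r (INR n + 2)). lra. field_simplify; nra.
  - simpl. rewrite mdist_refl. lra.
Qed.
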